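(* Let $T$, $\mathcal{S}=\mathcal{S}_+\cup\mathcal{S}_-$, $\Psi$, $U$, $\lambda,\mu$, $P_\lambda,P_\mu$ and $W$ be as in the context. Consider the discrete-time QBD on phase space $\mathcal{S}$ with transition blocks $$C'_{-1}=\frac12\begin{bmatrix}0&P_{\mu+-}\\0&P_{\mu--}\end{bmatrix},\quad C'_0=\frac12\begin{bmatrix}P_{\mu++}&P_{\lambda+-}\\P_{\mu-+}&P_{\lambda--}\end{bmatrix},\quad C'_1=\frac12\begin{bmatrix}P_{\lambda++}&0\\P_{\lambda-+}&0\end{bmatrix}.$$ Then it has the same $\mathcal{G}$-matrix as the QBD with blocks $$C_{-1}=\begin{bmatrix}0&(I-\mu^{-1}T_{++})^{-1}P_{\mu+-}\\0&W\end{bmatrix},\ C_0=\begin{bmatrix}0&(I-\mu^{-1}T_{++})^{-1}P_{\lambda+-}\\0&0\end{bmatrix},\ C_1=\begin{bmatrix}(I-\mu^{-1}T_{++})^{-1}P_{\lambda++}&0\\0&0\end{bmatrix};$$ that is, its $\mathcal{G}$-matrix equals $\begin{bmatrix}0&\Psi\\0&W\end{bmatrix}$.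
   Context: $T$ is the generator of a continuous-time Markov chain on a finite set $\mathcal{S}=\mathcal{S}_+\cup\mathcal{S}_-$ (disjoint, both nonempty), partitioned into blocks $T_{++},T_{+-},T_{-+},T_{--}$ according to $\mathcal{S}_\pm$. $\Psi$ is the minimal nonnegative solution of $T_{+-}+\Psi T_{--}+T_{++}\Psi+\Psi T_{-+}\Psi=0$ (the first-return probability matrix of the unit-rate fluid queue with phase generator $T$, rates $+1$ on $\mathcal{S}_+$ and $-1$ on $\mathcal{S}_-$), and $U:=T_{--}+T_{-+}\Psi$. $\lambda,\mu>0$ satisfy $\lambda,\mu\ge\max_i|T_{ii}|$; $P_\lambda:=I+\lambda^{-1}T$, $P_\mu:=I+\mu^{-1}T$ with blocks $P_{\lambda++}$ etc.; $W:=(I+\mu^{-1}U)(I-\lambda^{-1}U)^{-1}$. A discrete-time quasi-birth-death process (QBD) with transition blocks $L_{-1},L_0,L_1$ is a Markov chain $\{(Y_n,\kappa_n)\}$ on $\mathbb{Z}\times\mathcal{S}$ with $\mathbb{P}[Y_n=k+d,\kappa_n=j\mid Y_{n-1}=k,\kappa_{n-1}=i]=(L_d)_{ij}$ for $d\in\{-1,0,1\}$. Its $\mathcal{G}$-matrix has entries $\mathcal{G}_{ij}=\mathbb{P}[\theta<\infty,\kappa_\theta=j\mid Y_0=k,\kappa_0=i]$ with $\theta=\inf\{n>0:Y_n=k-1\}$. Matrices are partitioned into blocks according to $\mathcal{S}_+,\mathcal{S}_-$. *)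

(* Defs.v *)
From HB Require Import structures.
From mathcomp Require Import all_boot all_order all_algebra.
From mathcomp Require Import all_classical all_reals all_analysis.
Set Implicit Arguments. Unset Strict Implicit. Unset Printing Implicit Defensive.
Import Order.TTheory GRing.Theory Num.Theory.
Import numFieldNormedType.Exports.
Local Open Scope ring_scope.
Local Open Scope classical_set_scope.

Section QBD.
Variable R : realType.
Variable N : nat.

(* A step of a path: (d, j) with d : 'I_3 encoding the level increment d - 1
   in {-1,0,1}, and j the phase after the step. *)
Definition qbd_path (n : nat) := {ffun 'I_n -> 'I_3 * 'I_N}.

Definition qbd_block (Lm L0 Lp : 'M[R]_N) (d : 'I_3) : 'M[R]_N :=
  if val d == 0%N then Lm else if val d == 1%N then L0 else Lp.

Definition qbd_level n (w : qbd_path n) (k : nat) : int :=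
  \sum_(t < n | (t < k)%N) (((w t).1 : nat)%:Z - 1).

(* phase at time k (the starting phase is i) *)
Definition qbd_phase n (i : 'I_N) (w : qbd_path n) (k : nat) : 'I_N :=
  if k is k'.+1 then odflt i (omap (fun t : 'I_n => (w t).2) (insub k')) else i.

Definition qbd_pathprob (Lm L0 Lp : 'M[R]_N) n (i : 'I_N) (w : qbd_path n) : R :=
  \prod_(t < n) qbd_block Lm L0 Lp (w t).1 (qbd_phase i w t) (w t).2.

(* the path w, started at level k phase i, first reaches level k-1 at time n,
   in phase j *)
Definition qbd_first_passage n (i j : 'I_N) (w : qbd_path n) : bool :=
  [forall t : 'I_n, (t.+1 < n)%N ==> (0 <= qbd_level w t.+1)]
  && (qbd_level w n == -1) && (qbd_phase i w n == j).

(* P[theta = n, kappa_theta = j | Y_0 = k, kappa_0 = i] *)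
Definition qbd_fpt (Lm L0 Lp : 'M[R]_N) n (i j : 'I_N) : R :=
  \sum_(w : qbd_path n | qbd_first_passage i j w) qbd_pathprob Lm L0 Lp i w.

(* G is the G-matrix of the QBD (L_{-1}, L_0, L_1):
   G_ij = P[theta < oo, kappa_theta = j | ...] = sum_n P[theta = n, ...]. *)
Definition is_Gmatrix (Lm L0 Lp G : 'M[R]_N) : Prop :=
  forall i j : 'I_N,
    (fun K : nat => \sum_(0 <= n < K) qbd_fpt Lm L0 Lp n i j) @ \oo --> G i j.

End QBD.

Section Fluid.
Variable R : realType.

Definition is_generator n (T : 'M[R]_n) : Prop :=
  (forall i j, i != j -> 0 <= T i j) /\ (forall i, \sum_j T i j = 0).

Definition mx_nonneg m n (X : 'M[R]_(m, n)) : Prop := forall i j, 0 <= X i j.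

Definition psi_riccati p m (T : 'M[R]_(p + m)) (X : 'M[R]_(p, m)) : Prop :=
  ursubmx T + X *m drsubmx T + ulsubmx T *m X + X *m dlsubmx T *m X = 0.

Definition is_min_nonneg_sol p m (T : 'M[R]_(p + m)) (Psi : 'M[R]_(p, m)) : Prop :=
  [/\ mx_nonneg Psi, psi_riccati T Psi &
      forall X, mx_nonneg X -> psi_riccati T X -> forall i j, Psi i j <= X i j].

Definition Pmat n (T : 'M[R]_n) (a : R) : 'M[R]_n := 1%:M + a^-1 *: T.

Definition Umat p m (T : 'M[R]_(p + m)) (Psi : 'M[R]_(p, m)) : 'M[R]_m :=
  drsubmx T + dlsubmx T *m Psi.

Definition Wmat p m (T : 'M[R]_(p + m)) (Psi : 'M[R]_(p, m)) (lam mu : R) : 'M[R]_m :=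
  (1%:M + mu^-1 *: Umat T Psi) *m invmx (1%:M - lam^-1 *: Umat T Psi).

End Fluid.

(* Main.v *)
Require Import Defs.
From HB Require Import structures.
From mathcomp Require Import all_boot all_order all_algebra.
From mathcomp Require Import all_classical all_reals all_analysis.
From mathcomp Require Import zify.
From mathcomp.algebra_tactics Require Import ring lra.
Import Order.TTheory GRing.Theory Num.Theory.
Import numFieldNormedType.Exports.
Local Open Scope ring_scope.
Set Implicit Arguments. Unset Strict Implicit. Unset Printing Implicit Defensive.
Local Open Scope classical_set_scope.

Section MxOrder.
Variable R : realType.

Definition mxle m n (A B : 'M[R]_(m, n)) := forall i j, A i j <= B i j.
Definition mxnn m n (A : 'M[R]_(m, n)) := forall i j, 0 <= A i j.

Lemma mxle_refl m n (A : 'M[R]_(m, n)) : mxle A A.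
Proof. by move=> i j. Qed.

Lemma mxle_trans m n (A B C : 'M[R]_(m, n)) : mxle A B -> mxle B C -> mxle A C.
Proof. by move=> h1 h2 i j; exact: le_trans (h1 i j) (h2 i j). Qed.

Lemma mxle_anti m n (A B : 'M[R]_(m, n)) : mxle A B -> mxle B A -> A = B.
Proof. by move=> h1 h2; apply/matrixP => i j; apply/le_anti; rewrite h1 h2. Qed.

Lemma mxleD m n (A B C D : 'M[R]_(m, n)) : mxle A B -> mxle C D -> mxle (A + C) (B + D).
Proof. by move=> h1 h2 i j; rewrite !mxE lerD. Qed.

Lemma mxnnD m n (A B : 'M[R]_(m, n)) : mxnn A -> mxnn B -> mxnn (A + B).
Proof. by move=> h1 h2 i j; rewrite !mxE addr_ge0. Qed.

Lemma mxnn0 m n : mxnn (0 : 'M[R]_(m, n)).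
Proof. by move=> i j; rewrite mxE. Qed.

Lemma mxnn1 n : mxnn (1%:M : 'M[R]_n).
Proof. by move=> i j; rewrite mxE ler0n. Qed.

Lemma mxnnM m n p (A : 'M[R]_(m, n)) (B : 'M[R]_(n, p)) :
  mxnn A -> mxnn B -> mxnn (A *m B).
Proof. by move=> h1 h2 i j; rewrite mxE; apply: sumr_ge0 => k _; rewrite mulr_ge0. Qed.

Lemma mxnnZ m n (a : R) (A : 'M[R]_(m, n)) : 0 <= a -> mxnn A -> mxnn (a *: A).
Proof. by move=> ha h i j; rewrite mxE mulr_ge0. Qed.

Lemma mxleMl m n p (A : 'M[R]_(m, n)) (B C : 'M[R]_(n, p)) :
  mxnn A -> mxle B C -> mxle (A *m B) (A *m C).
Proof.
move=> hA h i j; rewrite !mxE; apply: ler_sum => k _.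
by rewrite ler_wpM2l.
Qed.

Lemma mxleMr m n p (A : 'M[R]_(n, p)) (B C : 'M[R]_(m, n)) :
  mxnn A -> mxle B C -> mxle (B *m A) (C *m A).
Proof.
move=> hA h i j; rewrite !mxE; apply: ler_sum => k _.
by rewrite ler_wpM2r.
Qed.

Lemma mxleM m n p (A B : 'M[R]_(m, n)) (C D : 'M[R]_(n, p)) :
  mxnn A -> mxnn C -> mxle A B -> mxle C D -> mxle (A *m C) (B *m D).
Proof.
move=> hA hC h1 h2; apply: (@mxle_trans _ _ _ (A *m D)).
  exact: mxleMl.
apply: mxleMr => //; move=> i j; exact: le_trans (hC i j) (h2 i j).
Qed.

Lemma mxnn_le m n (A B : 'M[R]_(m, n)) : mxnn A -> mxle A B -> mxnn B.
Proof. by move=> h1 h2 i j; exact: le_trans (h1 i j) (h2 i j). Qed.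

Lemma mxle_nn m n (A : 'M[R]_(m, n)) : mxnn A -> mxle 0 A.
Proof. by move=> h i j; rewrite mxE. Qed.

Lemma mxle_addr m n (A B : 'M[R]_(m, n)) : mxnn B -> mxle A (A + B).
Proof. by move=> h i j; rewrite mxE lerDl. Qed.

Lemma col_mulmx m n p j (A : 'M[R]_(m, n)) (B : 'M[R]_(n, p)) :
  A *m col j B = col j (A *m B).
Proof. by rewrite !colE mulmxA. Qed.

Lemma mmatrix_pos n (M : 'M[R]_n) :
  (forall i j, i != j -> M i j <= 0) -> (forall i, 0 < \sum_j M i j) ->
  forall v : 'cV[R]_n, (forall i, 0 <= (M *m v) i 0) -> forall i, 0 <= v i 0.
Proof.
move=> hoff hrow v hv i.
pose i0 := Order.arg_min i xpredT (fun k => v k 0).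
have hmin : forall k, v i0 0 <= v k 0.
  by move=> k; rewrite /i0; case: (@Order.TotalTheory.arg_minP _ R _ i xpredT (fun k => v k 0) isT) => // k0 _ /(_ k isT).
rewrite (le_trans _ (hmin i)) //; rewrite leNgt; apply/negP => hneg.
have := hv i0; rewrite mxE leNgt => /negP; apply.
apply: (@le_lt_trans _ _ (\sum_j M i0 j * v i0 0)).
  apply: ler_sum => j _.
  have [->|hne] := eqVneq j i0; first by [].
  have := hoff i0 j; rewrite eq_sym hne => /(_ isT) hm.
  by rewrite ler_wnM2l.
by rewrite -mulr_suml pmulr_rlt0.
Qed.

Lemma mmatrix_unit n (M : 'M[R]_n) :
  (forall i j, i != j -> M i j <= 0) -> (forall i, 0 < \sum_j M i j) ->
  M \in unitmx.
Proof.
move=> hoff hrow.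
have inj : forall v : 'cV[R]_n, M *m v = 0 -> v = 0.
  move=> v hv; apply/matrixP => i j; rewrite (ord1 j) mxE; apply/le_anti/andP; split.
    rewrite -oppr_ge0; have := @mmatrix_pos n M hoff hrow (- v).
    by rewrite mulmxN hv oppr0 => /(_ (fun i => mxnn0 i 0) i); rewrite mxE.
  by apply: (mmatrix_pos hoff hrow) => k; rewrite hv mxE.
rewrite -unitmx_tr -row_free_unit -kermx_eq0; apply/eqP.
apply/row_matrixP => i; rewrite row0.
have h := mulmx_ker M^T.
have : row i (kermx M^T) *m M^T = 0 by rewrite -row_mul h row0.
move=> /(congr1 trmx); rewrite trmx_mul trmxK trmx0 => /inj /(congr1 trmx).
by rewrite trmxK trmx0.
Qed.

Lemma mmatrix_inv_nn n (M : 'M[R]_n) :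
  (forall i j, i != j -> M i j <= 0) -> (forall i, 0 < \sum_j M i j) ->
  mxnn (invmx M).
Proof.
move=> hoff hrow i j.
have hu := mmatrix_unit hoff hrow.
have := @mmatrix_pos n M hoff hrow (col j (invmx M)).
rewrite col_mulmx mulmxV // => /(_ _ i); rewrite mxE; apply.
by move=> k; rewrite !mxE ler0n.
Qed.

Lemma mmatrix_mxnn n p (M : 'M[R]_n) (X : 'M[R]_(n, p)) :
  (forall i j, i != j -> M i j <= 0) -> (forall i, 0 < \sum_j M i j) ->
  mxnn (M *m X) -> mxnn X.
Proof.
move=> hoff hrow h i j.
have := @mmatrix_pos n M hoff hrow (col j X).
rewrite col_mulmx => /(_ _ i); rewrite mxE; apply => k; rewrite mxE; exact: h.
Qed.

End MxOrder.

Section MxCvg.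
Variable R : realType.

Lemma cvg_sum_ord n (f : 'I_n -> nat -> R) (a : 'I_n -> R) :
  (forall l, f l @ \oo --> a l) ->
  (fun k => (\sum_(l < n) f l k : R)) @ \oo --> (\sum_(l < n) a l : R).
Proof.
elim: n f a => [|n IH] f a h.
  rewrite big_ord0; under eq_cvg do rewrite big_ord0; exact: cvg_cst.
rewrite big_ord_recr /=; under eq_cvg do rewrite big_ord_recr /=.
apply: cvgD; last exact: h.
exact: (IH (fun l => f (widen_ord (leqnSn n) l)) (fun l => a (widen_ord (leqnSn n) l))).
Qed.

Definition mxcvg m n (X : nat -> 'M[R]_(m, n)) (L : 'M[R]_(m, n)) :=
  forall i j, (fun k => X k i j) @ \oo --> L i j.

Lemma mxcvg_cst m n (A : 'M[R]_(m, n)) : mxcvg (fun _ => A) A.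
Proof. by move=> i j; exact: cvg_cst. Qed.

Lemma mxcvgD m n (X Y : nat -> 'M[R]_(m, n)) A B :
  mxcvg X A -> mxcvg Y B -> mxcvg (fun k => X k + Y k) (A + B).
Proof.
move=> h1 h2 i j; rewrite mxE; under eq_cvg do rewrite mxE.
exact: cvgD.
Qed.

Lemma mxcvgZ m n (a : R) (X : nat -> 'M[R]_(m, n)) A :
  mxcvg X A -> mxcvg (fun k => a *: X k) (a *: A).
Proof.
move=> h i j; rewrite mxE; under eq_cvg do rewrite mxE.
apply: cvgM; [exact: cvg_cst | exact: h].
Qed.

Lemma mxcvgM m n p (X : nat -> 'M[R]_(m, n)) (Y : nat -> 'M[R]_(n, p)) A B :
  mxcvg X A -> mxcvg Y B -> mxcvg (fun k => X k *m Y k) (A *m B).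
Proof.
move=> h1 h2 i j.
have -> : (fun k => (X k *m Y k) i j) = (fun k => \sum_l X k i l * Y k l j).
  by apply/funext => k; rewrite mxE.
rewrite mxE. have := (@cvg_sum_ord n (fun l k => X k i l * Y k l j) (fun l => A i l * B l j)).
apply => l; exact: cvgM.
Qed.

Lemma mxcvg_le m n (X : nat -> 'M[R]_(m, n)) (Y : nat -> 'M[R]_(m, n)) A B :
  mxcvg X A -> mxcvg Y B -> (forall k, mxle (X k) (Y k)) -> mxle A B.
Proof.
move=> h1 h2 h i j; apply: (ler_cvg_to (h1 i j) (h2 i j)).
by apply: nearW => k; exact: h.
Qed.

Lemma mxcvg_uniq m n (X : nat -> 'M[R]_(m, n)) A B :
  mxcvg X A -> mxcvg X B -> A = B.
Proof.
move=> h1 h2; apply: mxle_anti;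
  [apply: (mxcvg_le h1 h2) | apply: (mxcvg_le h2 h1)] => k; exact: mxle_refl.
Qed.

Lemma mxcvg_shift m n (X : nat -> 'M[R]_(m, n)) A :
  mxcvg X A -> mxcvg (fun k => X k.+1) A.
Proof.
move=> h i j; have := h i j; rewrite -cvg_shiftS; exact.
Qed.

Lemma mono_mxcvg m n (X : nat -> 'M[R]_(m, n)) B :
  (forall k, mxle (X k) (X k.+1)) -> (forall k, mxle (X k) B) ->
  exists L, mxcvg X L /\ (forall k, mxle (X k) L).
Proof.
move=> hinc hub.
have nd : forall i j, nondecreasing_seq (fun k => X k i j).
  by move=> i j; apply/nondecreasing_seqP => k; exact: hinc.
have ub : forall i j, has_ubound (range (fun k => X k i j)).
  by move=> i j; exists (B i j) => _ [k _ <-]; exact: hub.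
exists (\matrix_(i, j) sup (range (fun k => X k i j))); split.
  by move=> i j; rewrite mxE; exact: nondecreasing_cvgn.
move=> k i j; rewrite mxE.
apply: (ler_cvg_to (cvg_cst (X k i j)) (nondecreasing_cvgn (nd i j) (ub i j))).
apply: filterS (nbhs_infty_ge k) => l hl; exact: (nd i j k l hl).
Qed.

Lemma kleene m n (F : 'M[R]_(m, n) -> 'M[R]_(m, n)) B :
  (forall X Y, mxnn X -> mxle X Y -> mxle (F X) (F Y)) ->
  mxnn (F 0) ->
  (forall X L, mxcvg X L -> mxcvg (fun k => F (X k)) (F L)) ->
  mxnn B -> mxle (F B) B ->
  exists L, [/\ mxnn L, mxle L B, F L = L & mxcvg (fun k => iter k F 0) L].
Proof.
move=> hmono hF0 hcont hB hFB.
have nnX : forall k, mxnn (iter k F 0).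
  elim=> [|k IH] /=; first exact: mxnn0.
  apply: (mxnn_le hF0); apply: hmono; [exact: mxnn0 | exact: mxle_nn].
have inc : forall k, mxle (iter k F 0) (iter k.+1 F 0).
  elim=> [|k IH] /=; first exact: mxle_nn.
  exact: hmono.
have ub : forall k, mxle (iter k F 0) B.
  elim=> [|k IH] /=; first exact: mxle_nn.
  apply: mxle_trans hFB; exact: hmono.
have [L [hL hXL]] := mono_mxcvg inc ub.
exists L; split => //.
- exact: mxnn_le (nnX 0%N) (hXL 0%N).
- by apply: (mxcvg_le hL (mxcvg_cst (A:=B))) => k; exact: ub.
- apply: (mxcvg_uniq (hcont _ _ hL)).
  exact: (mxcvg_shift hL).
Qed.

End MxCvg.

Section Paths.
Variable N : nat.

Definition pcons n (s : 'I_3 * 'I_N) (w : qbd_path N n) : qbd_path N n.+1 :=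
  [ffun t : 'I_n.+1 => if unlift ord0 t is Some t' then w t' else s].
Definition ptail n (w : qbd_path N n.+1) : qbd_path N n :=
  [ffun t => w (lift ord0 t)].

Lemma pcons0 n s (w : qbd_path N n) : pcons s w ord0 = s.
Proof. by rewrite /pcons ffunE unlift_none. Qed.

Lemma pconsS n s (w : qbd_path N n) t : pcons s w (lift ord0 t) = w t.
Proof. by rewrite /pcons ffunE liftK. Qed.

Lemma pconsK n (w : qbd_path N n.+1) : pcons (w ord0) (ptail w) = w.
Proof.
apply/ffunP => t; rewrite /pcons ffunE.
by case: unliftP => [t' ->|->]; rewrite ?ffunE.
Qed.

Lemma ptailK n s (w : qbd_path N n) : ptail (pcons s w) = w.
Proof. by apply/ffunP => t; rewrite ffunE pconsS. Qed.

Lemma sum_paths (V : nmodType) n (F : qbd_path N n.+1 -> V) :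
  \sum_(w : qbd_path N n.+1) F w = \sum_(s : 'I_3 * 'I_N) \sum_(w : qbd_path N n) F (pcons s w).
Proof.
rewrite pair_big /=.
rewrite (reindex (fun x : ('I_3 * 'I_N) * qbd_path N n => pcons x.1 x.2)) //=.
exists (fun w : qbd_path N n.+1 => (w ord0, ptail w)) => [[s w] _|w _] /=.
  by rewrite pcons0 ptailK.
by rewrite pconsK.
Qed.

Lemma level0 n (w : qbd_path N n) : qbd_level w 0 = 0.
Proof. by rewrite /qbd_level big_pred0. Qed.

Lemma level_cons n s (w : qbd_path N n) k :
  qbd_level (pcons s w) k.+1 = (((s.1 : nat)%:Z - 1) + qbd_level w k)%R.
Proof.
rewrite /qbd_level big_mkcond big_ord_recl /= pcons0.
rewrite [in RHS]big_mkcond; congr (_ + _).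
by apply: eq_bigr => t _; rewrite pconsS /bump add1n ltnS.
Qed.

Lemma phase_cons n s (w : qbd_path N n) i k : (k <= n)%N ->
  qbd_phase i (pcons s w) k.+1 = qbd_phase s.2 w k.
Proof.
rewrite /qbd_phase; case: k => [|k] hk.
  case: insubP => [t _ ht|]; last by [].
  have -> : t = ord0 by apply: val_inj.
  by rewrite /= pcons0.
case: insubP => [t _ ht|]; last by rewrite ltnS hk.
case: insubP => [t' _ ht'|]; last by rewrite hk.
have -> : t = lift ord0 t' by apply: val_inj; rewrite /= /bump add1n ht ht'.
by rewrite /= pconsS.
Qed.

Lemma forall_ordS n (P : 'I_n.+1 -> bool) :
  [forall t, P t] = P ord0 && [forall t : 'I_n, P (lift ord0 t)].
Proof.
apply/forallP/andP => [h|[h0 /forallP h] t]; first by split => //; apply/forallP.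
by case: (unliftP ord0 t) => [t' ->|->].
Qed.

Lemma path0_uniq (w w' : qbd_path N 0) : w = w'.
Proof. by apply/ffunP => -[]. Qed.

End Paths.

Section QBDrec.
Variable R : realType.
Variable N : nat.
Variables Lm L0 Lp : 'M[R]_N.

Definition gfp (h : nat) n (i j : 'I_N) (w : qbd_path N n) : bool :=
  [forall t : 'I_n, (t.+1 < n)%N ==> (0 <= h%:Z + qbd_level w t.+1)]
  && (h%:Z + qbd_level w n == -1) && (qbd_phase i w n == j).

Lemma gfp_cons d n s (w : qbd_path N n) i j :
  gfp d i j (pcons s w) =
  if (d + s.1 == 0)%N then (n == 0%N) && (s.2 == j) else gfp (d + s.1).-1 s.2 j w.
Proof.
have E : forall t : 'I_n,
   (((lift ord0 t).+1 < n.+1)%N ==> (0 <= d%:Z + qbd_level (pcons s w) (lift ord0 t).+1))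
   = ((t.+1 < n)%N ==> (0 <= (d%:Z + ((s.1 : nat)%:Z - 1)) + qbd_level w t.+1)).
  by move=> t; rewrite lift0 ltnS level_cons addrA.
rewrite /gfp forall_ordS (eq_forallb E) -[(nat_of_ord (@ord0 n)).+1]/1%N !level_cons level0 addr0.
rewrite phase_cons // addrA.
case: ifP => h0.
  have hd : d = 0%N by lia.
  have hs : (s.1 : nat) = 0%N by lia.
  rewrite hd hs /= add0r.
  case: n w {E} => [|n] w /=.
    rewrite level0 addr0 eqxx andbT.
    by rewrite (_ : [forall t : 'I_0, _] = true) //; apply/forallP => -[].
  by [].
rewrite !addrA.
have -> : (d%:Z + (s.1 : nat)%:Z - 1) = ((d + s.1).-1)%:Z by lia.
have -> : ((1 < n.+1)%N ==> (0 <= ((d + s.1).-1)%:Z)) = true.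
  by apply/implyP => _; rewrite lez_nat.
by [].
Qed.

Lemma pathprob_cons n s (w : qbd_path N n) i :
  qbd_pathprob Lm L0 Lp i (pcons s w) = qbd_block Lm L0 Lp s.1 i s.2 * qbd_pathprob Lm L0 Lp s.2 w.
Proof.
rewrite /qbd_pathprob big_ord_recl pcons0; congr (_ * _).
apply: eq_bigr => t _; rewrite pconsS lift0 phase_cons //; exact: ltnW.
Qed.

Definition Hz (d n : nat) (i j : 'I_N) : R :=
  \sum_(w : qbd_path N n | gfp d i j w) qbd_pathprob Lm L0 Lp i w.

Definition Hh (d n : nat) (i j : 'I_N) : R :=
  if d is d'.+1 then Hz d' n i j else ((n == 0%N)%:R * (i == j)%:R).

Lemma Hz0 d i j : Hz d 0 i j = 0.
Proof.
rewrite /Hz big_pred0 // => w; rewrite /gfp level0 addr0.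
by rewrite (_ : (d%:Z == -1) = false) ?andbF //; apply/negbTE/eqP => h; lia.
Qed.

Lemma Hh_rec d n i j :
  Hh d.+1 n.+1 i j =
  \sum_(s : 'I_3 * 'I_N) qbd_block Lm L0 Lp s.1 i s.2 * Hh (d + s.1) n s.2 j.
Proof.
rewrite /= /Hz big_mkcond sum_paths; apply: eq_bigr => s _.
under eq_bigr do rewrite gfp_cons pathprob_cons.
case h0: (d + s.1 == 0)%N.
  have -> : (d + s.1 = 0)%N by apply/eqP.
  rewrite /=.
  case: n => [|n] /=; last by rewrite big1 ?mul0r ?mulr0.
  case: eqP => hj /=; last by rewrite big1 ?mulr0.
  rewrite mul1r mulr1 (big_pred1 [ffun t : 'I_0 => s]); last first.
    by move=> w; rewrite inE; apply/esym/eqP; exact: path0_uniq.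
  by rewrite /qbd_pathprob big_ord0 mulr1.
case E: (d + s.1)%N h0 => [|e] //= _.
by rewrite /Hz mulr_sumr [RHS]big_mkcond.
Qed.

Definition HM d n : 'M[R]_N := \matrix_(i, j) Hh d n i j.

Lemma HM_rec d n :
  HM d.+1 n.+1 = Lm *m HM d n + L0 *m HM d.+1 n + Lp *m HM d.+2 n.
Proof.
apply/matrixP => i j; rewrite !mxE Hh_rec.
rewrite -(pair_bigA _ (fun (e : 'I_3) (k : 'I_N) => qbd_block Lm L0 Lp e i k * Hh (d + e) n k j)) /=.
rewrite !big_ord_recl big_ord0 addr0 /= addn0 addn1 addn2 addrA.
congr (_ + _ + _); apply: eq_bigr => k _; rewrite mxE //.
Qed.

Lemma HM0 n : HM 0 n = (n == 0%N)%:R *: 1%:M.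
Proof. by apply/matrixP => i j; rewrite !mxE. Qed.

Lemma HMS0 d : HM d.+1 0 = 0.
Proof. by apply/matrixP => i j; rewrite !mxE /= Hz0. Qed.

Definition SM d K : 'M[R]_N := \sum_(0 <= n < K) HM d n.

Lemma SM0 d : SM d 0 = 0.
Proof. by rewrite /SM big_geq. Qed.

Lemma SM_zero K : SM 0 K.+1 = 1%:M.
Proof.
rewrite /SM big_nat_recl // HM0 scale1r big1 ?addr0 // => n _.
by rewrite HM0 scale0r.
Qed.

Lemma SM_rec d K :
  SM d.+1 K.+1 = Lm *m SM d K + L0 *m SM d.+1 K + Lp *m SM d.+2 K.
Proof.
rewrite /SM big_nat_recl // HMS0 add0r.
under eq_bigr do rewrite HM_rec.
by rewrite !big_split /= !mulmx_sumr.
Qed.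

Lemma SM_step d K : SM d K.+1 = SM d K + HM d K.
Proof. by rewrite /SM big_nat_recr. Qed.

End QBDrec.


Section QBDnn.
Variable R : realType.
Variable N : nat.
Variables Lm L0 Lp : 'M[R]_N.
Hypotheses (hm : mxnn Lm) (h0 : mxnn L0) (hp : mxnn Lp).

Lemma block_nn e : mxnn (qbd_block Lm L0 Lp e).
Proof. by rewrite /qbd_block; case: ifP => _ //; case: ifP. Qed.

Lemma Hh_nn d n i j : 0 <= Hh Lm L0 Lp d n i j.
Proof.
case: d => [|d] /=; first by rewrite mulr_ge0.
apply: sumr_ge0 => w _; apply: prodr_ge0 => t _; exact: block_nn.
Qed.

Lemma HM_nn d n : mxnn (HM Lm L0 Lp d n).
Proof. by move=> i j; rewrite mxE Hh_nn. Qed.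

Lemma SM_nn d K : mxnn (SM Lm L0 Lp d K).
Proof.
elim: K => [|K IH]; first by rewrite SM0; exact: mxnn0.
rewrite SM_step; apply: mxnnD => //; exact: HM_nn.
Qed.

Lemma SM_inc d K : mxle (SM Lm L0 Lp d K) (SM Lm L0 Lp d K.+1).
Proof. rewrite SM_step; apply: mxle_addr; exact: HM_nn. Qed.

Lemma SM_mono d K1 K2 : (K1 <= K2)%N -> mxle (SM Lm L0 Lp d K1) (SM Lm L0 Lp d K2).
Proof.
move=> /subnK <-; elim: (K2 - K1)%N => [|k IH]; first by rewrite add0n; exact: mxle_refl.
apply: mxle_trans IH _; rewrite addSn; exact: SM_inc.
Qed.

End QBDnn.

Lemma fpt_SM (R : realType) N (Lm L0 Lp : 'M[R]_N) K i j :
  \sum_(0 <= n < K) qbd_fpt Lm L0 Lp n i j = SM Lm L0 Lp 1 K i j.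
Proof.
rewrite /SM summxE; apply: eq_bigr => n _; rewrite mxE /= /Hz /qbd_fpt.
apply: eq_bigl => w; rewrite /gfp /qbd_first_passage add0r.
congr (_ && _ && _); apply: eq_forallb => t; by rewrite add0r.
Qed.

Section Glemma.
Variable R : realType.
Variable N : nat.
Variables Lm L0 Lp : 'M[R]_N.
Hypotheses (hm : mxnn Lm) (h0 : mxnn L0) (hp : mxnn Lp).

Definition Qmap (X : 'M[R]_N) := Lm + L0 *m X + Lp *m (X *m X).

Definition mxpow (G : 'M[R]_N) d := iter d (mulmx G) 1%:M.

Lemma mxpow_nn G d : mxnn G -> mxnn (mxpow G d).
Proof. move=> hG; elim: d => [|d IH] /=; [exact: mxnn1 | exact: mxnnM]. Qed.

Local Notation S := (SM Lm L0 Lp).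

Lemma SM_upper G : mxnn G -> Qmap G = G -> forall K d, mxle (S d K) (mxpow G d).
Proof.
move=> hG hQ; elim=> [|K IH] d.
  rewrite SM0; apply: mxle_nn; exact: mxpow_nn.
case: d => [|d]; first by rewrite SM_zero; exact: mxle_refl.
rewrite SM_rec.
have -> : mxpow G d.+1 = Qmap G *m mxpow G d by rewrite hQ.
rewrite /Qmap !mulmxDl -!mulmxA.
apply: mxleD; first apply: mxleD.
- exact: mxleMl (IH d).
- exact: mxleMl (IH d.+1).
- exact: mxleMl (IH d.+2).
Qed.

Lemma SM_prod K d d' K' : mxle (S d K *m S d' K') (S (d + d') (K + K')).
Proof.
elim: K d d' K' => [|K IH] d d' K'.
  rewrite SM0 mul0mx; apply: mxle_nn; exact: SM_nn.
case: d => [|e].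
  rewrite SM_zero mul1mx add0n; apply: SM_mono => //; exact: leq_addl.
rewrite SM_rec !mulmxDl -!mulmxA addSn addSn SM_rec.
apply: mxleD; first apply: mxleD.
- apply: mxleMl => //; exact: IH.
- apply: mxleMl => //; rewrite -addSn; exact: IH.
- apply: mxleMl => //; rewrite -!addSn; exact: IH.
Qed.

Lemma Qmap_mono X Y : mxnn X -> mxle X Y -> mxle (Qmap X) (Qmap Y).
Proof.
move=> hX hXY; rewrite /Qmap; apply: mxleD; first apply: mxleD.
- exact: mxle_refl.
- exact: mxleMl.
- apply: mxleMl => //; apply: mxleM => //.
Qed.

Lemma Qmap_cont (X : nat -> 'M[R]_N) L :
  mxcvg X L -> mxcvg (fun k => Qmap (X k)) (Qmap L).
Proof.
move=> h; rewrite /Qmap; apply: mxcvgD; first apply: mxcvgD.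
- exact: mxcvg_cst.
- apply: mxcvgM => //; exact: mxcvg_cst.
- apply: mxcvgM; first exact: mxcvg_cst.
  exact: mxcvgM.
Qed.

Lemma G_lemma G :
  mxnn G -> Qmap G = G ->
  (forall X, mxnn X -> mxle X G -> Qmap X = X -> mxle G X) ->
  is_Gmatrix Lm L0 Lp G.
Proof.
move=> hG hQ hmin.
have ub : forall K, mxle (S 1 K) G.
  move=> K; have := SM_upper hG hQ K 1; rewrite /mxpow /= mulmx1; exact.
have [Ls [hcv hle]] := mono_mxcvg (fun K => SM_inc hm h0 hp 1 K) ub.
have LsG : mxle Ls G by apply: (mxcvg_le hcv (mxcvg_cst (A:=G))).
have Lsnn : mxnn Ls := mxnn_le (SM_nn hm h0 hp 1 0) (hle 0%N).
have super : mxle (Qmap Ls) Ls.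
  apply: (mxcvg_le (Qmap_cont hcv) (mxcvg_cst (A:=Ls))) => K.
  apply: mxle_trans (hle (K + K).+2).
  rewrite [X in mxle _ X]SM_rec SM_zero mulmx1 /Qmap.
  apply: mxleD; first apply: mxleD.
  - exact: mxle_refl.
  - apply: mxleMl => //; apply: SM_mono => //; lia.
  - apply: mxleMl => //; apply: mxle_trans (SM_prod K 1 1 K) _.
    apply: SM_mono => //; lia.
have Q0 : mxnn (Qmap 0) by rewrite /Qmap !mulmx0 !addr0.
have [L [Lnn LLs QL _]] := kleene Qmap_mono Q0 Qmap_cont Lsnn super.
have GL := hmin L Lnn (mxle_trans LLs LsG) QL.
have -> : G = Ls by apply: mxle_anti => //; exact: mxle_trans GL LLs.
by move=> i j; under eq_cvg do rewrite fpt_SM; exact: hcv.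
Qed.

End Glemma.

Section Basic.
Variable R : realType.

Definition ones k : 'cV[R]_k := const_mx 1.

Lemma rowsumE k l (M : 'M[R]_(k, l)) i : \sum_j M i j = (M *m ones l) i 0.
Proof. by rewrite mxE; apply: eq_bigr => j _; rewrite mxE mulr1. Qed.

Lemma nn_one_plus k (M : 'M[R]_k) a : 0 < a ->
  (forall i j, i != j -> 0 <= M i j) -> (forall i, - a <= M i i) ->
  mxnn (1%:M + a^-1 *: M).
Proof.
move=> ha hoff hdiag i j; rewrite !mxE.
have [->|hij] := eqVneq i j.
  rewrite mulr1n -(mulVf (lt0r_neq0 ha)) -mulrDr mulr_ge0 //.
    by rewrite invr_ge0 ltW.
  by rewrite -lerBlDl sub0r.
rewrite (_ : (false%:R : R) = 0) // add0r; apply: mulr_ge0; [by rewrite invr_ge0 ltW | exact: hoff].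
Qed.

Lemma mmat_one_minus k (M : 'M[R]_k) a : 0 < a ->
  (forall i j, i != j -> 0 <= M i j) -> mxle (M *m ones k) 0 ->
  (1%:M - a^-1 *: M) \in unitmx /\ mxnn (invmx (1%:M - a^-1 *: M)).
Proof.
move=> ha hoff hrow.
have h1 : forall i j, i != j -> (1%:M - a^-1 *: M) i j <= 0.
  move=> i j hij; rewrite !mxE (negbTE hij) mulr0n sub0r oppr_le0.
  by apply: mulr_ge0; [rewrite invr_ge0 ltW | exact: hoff].
have h2 : forall i, 0 < \sum_j (1%:M - a^-1 *: M) i j.
  move=> i; rewrite rowsumE mulmxBl mul1mx -scalemxAl !mxE.
  have := hrow i 0; rewrite mxE => hi.
  rewrite subr_gt0 (@le_lt_trans _ _ 0) //.
  by rewrite mxE in hi; apply: mulr_ge0_le0 => //; rewrite invr_ge0 ltW.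
split; [exact: mmatrix_unit h1 h2 | exact: mmatrix_inv_nn h1 h2].
Qed.

Lemma comm_AU k (U : 'M[R]_k) a b :
  (1%:M - a *: U) *m (1%:M + b *: U) = (1%:M + b *: U) *m (1%:M - a *: U).
Proof.
rewrite !mulmxDl !mulmxDr !mulNmx !mulmxN !mul1mx !mulmx1.
rewrite -!scalemxAl -!scalemxAr !scalerA mulrC.
by rewrite !addrA; congr (_ + _); rewrite addrAC.
Qed.

Lemma inv_comm k (M K : 'M[R]_k) : M \in unitmx -> M *m K = K *m M ->
  invmx M *m K = K *m invmx M.
Proof.
move=> hu hc.
rewrite -[invmx M *m K]mulmx1 -(mulmxV hu) mulmxA -[invmx M *m K *m M]mulmxA -hc.
by rewrite mulmxA mulVmx // mul1mx.
Qed.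

End Basic.

Ltac mxnorm1 := rewrite ?(mulmxDl, mulmxDr, mulNmx, mulmxN, mul1mx, mulmx1, mul0mx, mulmx0);
  rewrite -?(scalemxAl, scalemxAr); rewrite -?mulmxA.
Ltac mxnorm := do 3 mxnorm1.
Ltac mxlin := apply/matrixP => i j; rewrite !mxE; field; rewrite ?pnatr_eq0 ?lt0r_neq0 //.

Section Fluid.
Variables (R : realType) (p m : nat).
Variables (A : 'M[R]_p) (B : 'M[R]_(p, m)) (C : 'M[R]_(m, p)) (D : 'M[R]_m).
Variables (Psi : 'M[R]_(p, m)) (lam mu : R).

Definition Ric X := B + X *m D + A *m X + X *m C *m X.

Hypotheses (hA : forall i j, i != j -> 0 <= A i j) (hD : forall i j, i != j -> 0 <= D i j).
Hypotheses (hB : mxnn B) (hC : mxnn C).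
Hypotheses (rowP : A *m ones R p + B *m ones R m = 0) (rowM : C *m ones R p + D *m ones R m = 0).
Hypotheses (hlam : 0 < lam) (hmu : 0 < mu).
Hypotheses (hAl : forall i, - lam <= A i i) (hAm : forall i, - mu <= A i i).
Hypotheses (hDl : forall i, - lam <= D i i) (hDm : forall i, - mu <= D i i).
Hypotheses (hPnn : mxnn Psi) (hPric : Ric Psi = 0).
Hypothesis hPmin : forall X, mxnn X -> Ric X = 0 -> mxle Psi X.

Definition Gam X := 2^-1 *: (mu^-1 *: B + (1%:M + mu^-1 *: A) *m X
   + X *m (1%:M + mu^-1 *: D) + mu^-1 *: (X *m C *m X)).

Lemma GamE X : Gam X = X + (2^-1 * mu^-1) *: Ric X.
Proof.
rewrite /Gam /Ric mulmxDl mulmxDr mul1mx mulmx1 -scalemxAl -scalemxAr.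
apply/matrixP => i j; rewrite !mxE.
have h2 : (2 : R) != 0 by rewrite pnatr_eq0.
field; rewrite ?lt0r_neq0 //.
Qed.

Lemma mxleZ k l (a : R) (X Y : 'M[R]_(k, l)) : 0 <= a -> mxle X Y -> mxle (a *: X) (a *: Y).
Proof. by move=> ha h i j; rewrite !mxE ler_wpM2l. Qed.

Lemma ones_nn k : mxnn (ones R k).
Proof. by move=> i j; rewrite mxE. Qed.

Lemma nnPA : mxnn (1%:M + mu^-1 *: A).
Proof. exact: nn_one_plus. Qed.
Lemma nnPD : mxnn (1%:M + mu^-1 *: D).
Proof. exact: nn_one_plus. Qed.

Lemma Gam_mono X Y : mxnn X -> mxle X Y -> mxle (Gam X) (Gam Y).
Proof.
move=> hX hXY; have hY := mxnn_le hX hXY.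
apply: mxleZ; first by rewrite invr_ge0 ler0n.
apply: mxleD; first apply: mxleD; first apply: mxleD.
- exact: mxle_refl.
- apply: mxleMl => //; exact: nnPA.
- apply: mxleMr => //; exact: nnPD.
- apply: mxleZ; first by rewrite invr_ge0 ltW.
  apply: mxleM => //; first exact: mxnnM.
  exact: mxleMr.
Qed.

Lemma Gam0 : mxnn (Gam 0).
Proof.
rewrite /Gam !mulmx0 !mul0mx scaler0 !addr0; apply: mxnnZ; first by rewrite invr_ge0 ler0n.
by apply: mxnnZ => //; rewrite invr_ge0 ltW.
Qed.

Lemma Gam_cont (X : nat -> 'M[R]_(p, m)) L :
  mxcvg X L -> mxcvg (fun k => Gam (X k)) (Gam L).
Proof.
move=> h; rewrite /Gam; apply: mxcvgZ.
apply: mxcvgD; first apply: mxcvgD; first apply: mxcvgD.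
- exact: mxcvg_cst.
- apply: mxcvgM => //; exact: mxcvg_cst.
- apply: mxcvgM => //; exact: mxcvg_cst.
- apply: mxcvgZ; apply: mxcvgM => //; apply: mxcvgM => //; exact: mxcvg_cst.
Qed.

Lemma Gam_fix X : Gam X = X -> Ric X = 0.
Proof.
move=> hG; have h : (2^-1 * mu^-1) *: Ric X = 0.
  by apply: (addrI X); rewrite addr0 -GamE.
have hc : (2^-1 * mu^-1 : R) != 0 by rewrite mulf_neq0 // invr_neq0 // ?pnatr_eq0 // lt0r_neq0.
by rewrite -[Ric X]scale1r -(mulVf hc) -scalerA h scaler0.
Qed.

Lemma Gamma_lemma X : mxnn X -> mxle (Ric X) 0 -> mxle Psi X.
Proof.
move=> hX hR.
have hGX : mxle (Gam X) X.
  move=> i j; rewrite GamE mxE [X in _ + X]mxE gerDl; apply: mulr_ge0_le0.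
    by rewrite mulr_ge0 // invr_ge0 ?ler0n ?ltW.
  by have := hR i j; rewrite [X in _ <= X]mxE.
have [L [hL hLX hGL _]] := kleene Gam_mono Gam0 Gam_cont hX hGX.
exact: mxle_trans (hPmin hL (Gam_fix hGL)) hLX.
Qed.

Lemma Gam_sub X : mxnn X -> mxle (X *m ones R m) (ones R p) ->
  mxle (Gam X *m ones R m) (ones R p).
Proof.
move=> hX hXe.
set e := ones R m; set f := ones R p.
have hAf : A *m f = - (B *m e) by apply/eqP; rewrite -addr_eq0 rowP.
have hDe : D *m e = - (C *m f) by apply/eqP; rewrite -addr_eq0 addrC rowM.
have E1 : Gam X *m e = 2^-1 *: (mu^-1 *: (B *m e) + (1%:M + mu^-1 *: A) *m (X *m e)
   + X *m ((1%:M + mu^-1 *: D) *m e) + mu^-1 *: ((X *m C) *m (X *m e))).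
  rewrite /Gam -!scalemxAl -!mulmxA !mulmxDl !mulmxDr -!scalemxAl -!scalemxAr !mul1mx -!mulmxA.
  by rewrite mulmx1 mulmxDl -scalemxAl -mulmxA.
set V := 2^-1 *: (mu^-1 *: (B *m e) + (1%:M + mu^-1 *: A) *m f
   + X *m ((1%:M + mu^-1 *: D) *m e) + mu^-1 *: ((X *m C) *m f)).
have E2 : V = 2^-1 *: (f + X *m e).
  rewrite /V mulmxDl mul1mx -scalemxAl hAf mulmxDl mul1mx -scalemxAl hDe.
  rewrite mulmxDr -scalemxAr mulmxN -mulmxA.
  apply/matrixP => i j; rewrite !mxE; ring.
rewrite E1; apply: (@mxle_trans _ _ _ _ V).
  apply: mxleZ; first by rewrite invr_ge0 ler0n.
  apply: mxleD; first apply: mxleD; first apply: mxleD.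
  - exact: mxle_refl.
  - apply: mxleMl => //; exact: nnPA.
  - exact: mxle_refl.
  - apply: mxleZ; first by rewrite invr_ge0 ltW.
    by apply: mxleMl => //; exact: mxnnM.
rewrite E2 => i j; rewrite !mxE.
have := hXe i j; rewrite [X in _ <= X]mxE => h.
rewrite mxE in h. lra.
Qed.

Lemma Psi_sub : mxle (Psi *m ones R m) (ones R p).
Proof.
have hGP : mxle (Gam Psi) Psi by rewrite GamE hPric scaler0 addr0; exact: mxle_refl.
have [L [hL hLP hGL hcv]] := kleene Gam_mono Gam0 Gam_cont hPnn hGP.
have it : forall k, mxnn (iter k Gam 0) /\ mxle (iter k Gam 0 *m ones R m) (ones R p).
  elim=> [|k [h1 h2]] /=.
    split; [exact: mxnn0 | rewrite mul0mx; apply: mxle_nn; exact: ones_nn].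
  split; last exact: Gam_sub.
  apply: (mxnn_le Gam0); apply: Gam_mono => //; [exact: mxnn0 | exact: mxle_nn].
have hLe : mxle (L *m ones R m) (ones R p).
  apply: (mxcvg_le (mxcvgM hcv (mxcvg_cst (A:=ones R m))) (mxcvg_cst (A:=ones R p))) => k.
  exact: (it k).2.
apply: mxle_trans hLe; apply: mxleMr; first exact: ones_nn.
exact: hPmin hL (Gam_fix hGL).
Qed.

Definition Umx X := D + C *m X.
Definition Amx X := 1%:M - lam^-1 *: Umx X.
Definition Wm := (1%:M + mu^-1 *: Umx Psi) *m invmx (Amx Psi).
Definition Jm := invmx (1%:M - mu^-1 *: A).

Lemma U_off X : mxnn X -> forall i j, i != j -> 0 <= Umx X i j.
Proof.
move=> hX i j hij; rewrite !mxE addr_ge0 ?hD //.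
by have := mxnnM hC hX i j; rewrite mxE.
Qed.

Lemma U_row X : mxnn X -> mxle (X *m ones R m) (ones R p) -> mxle (Umx X *m ones R m) 0.
Proof.
move=> hX hXe; rewrite /Umx mulmxDl -mulmxA.
apply: (@mxle_trans _ _ _ _ (D *m ones R m + C *m ones R p)).
  apply: mxleD; [exact: mxle_refl | exact: mxleMl].
by rewrite addrC rowM; exact: mxle_refl.
Qed.

Lemma Amx_ok X : mxnn X -> mxle (X *m ones R m) (ones R p) ->
  Amx X \in unitmx /\ mxnn (invmx (Amx X)).
Proof. by move=> hX hXe; apply: mmat_one_minus => //; [exact: U_off | exact: U_row]. Qed.

Lemma J_ok : (1%:M - mu^-1 *: A) \in unitmx /\ mxnn Jm.
Proof.
apply: mmat_one_minus => //.
have -> : A *m ones R p = - (B *m ones R m) by apply/eqP; rewrite -addr_eq0 rowP.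
move=> i j; rewrite mxE [X in _ <= X]mxE oppr_le0; exact: (mxnnM hB (@ones_nn m)).
Qed.

Lemma W_nn : mxnn Wm.
Proof.
apply: mxnnM; last exact: (Amx_ok hPnn Psi_sub).2.
apply: nn_one_plus => //; first exact: U_off.
move=> i; rewrite !mxE; apply: (le_trans (hDm i)); rewrite lerDl.
by have := mxnnM hC hPnn i i; rewrite mxE.
Qed.

Lemma W_right : Wm *m Amx Psi = 1%:M + mu^-1 *: Umx Psi.
Proof. by rewrite /Wm mulmxKV //; exact: (Amx_ok hPnn Psi_sub).1. Qed.

Lemma W_left : Amx Psi *m Wm = 1%:M + mu^-1 *: Umx Psi.
Proof.
rewrite /Wm mulmxA /Amx comm_AU -mulmxA mulmxV ?mulmx1 //.
exact: (Amx_ok hPnn Psi_sub).1.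
Qed.

Lemma scale_inj0 k l (a : R) (M : 'M[R]_(k, l)) : a != 0 -> a *: M = 0 -> M = 0.
Proof. by move=> ha h; rewrite -[M]scale1r -(mulVf ha) -scalerA h scaler0. Qed.

Lemma key_alg (K Rr : 'M[R]_(p, m)) (Y U : 'M[R]_m) :
  K *m (1%:M - Y) = Rr *m (mu^-1 *: 1%:M + lam^-1 *: Y) ->
  Y *m (1%:M - lam^-1 *: U) = 1%:M + mu^-1 *: U -> Rr + K *m U = 0.
Proof.
move=> h1 h2.
set c := lam^-1 + mu^-1.
have hc : c != 0 by rewrite lt0r_neq0 // addr_gt0 // invr_gt0.
have E1 : (1%:M - Y) *m (1%:M - lam^-1 *: U) = - (c *: U).
  rewrite mulmxBl mul1mx h2; apply/matrixP => i j; rewrite !mxE /c; ring.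
have E2 : (mu^-1 *: 1%:M + lam^-1 *: Y) *m (1%:M - lam^-1 *: U) = c *: 1%:M.
  rewrite mulmxDl -!scalemxAl mul1mx h2; apply/matrixP => i j; rewrite !mxE /c; ring.
have := congr1 (mulmx^~ (1%:M - lam^-1 *: U)) h1.
rewrite /= -!mulmxA E1 E2 mulmxN -!scalemxAr mulmx1 => h.
apply: (scale_inj0 hc); by rewrite scalerDr -h addNr.
Qed.

Lemma Ric_U X : Ric X = B + A *m X + X *m Umx X.
Proof.
rewrite /Ric /Umx mulmxDr mulmxA.
by rewrite -!addrA; congr (_ + _); rewrite addrC -!addrA; congr (_ + _); rewrite addrC.
Qed.

Lemma W_eq : Wm = 1%:M + mu^-1 *: Umx Psi + lam^-1 *: (Umx Psi *m Wm).
Proof. by rewrite -W_left /Amx mulmxBl mul1mx -scalemxAl subrK. Qed.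

Lemma Psi_eq : Psi = mu^-1 *: (B + A *m Psi) + lam^-1 *: ((B + A *m Psi) *m Wm) + Psi *m Wm.
Proof.
have hR : B + A *m Psi = - (Psi *m Umx Psi).
  by apply/eqP; rewrite -addr_eq0 -Ric_U hPric.
have hW := W_eq.
rewrite hR; move: hW; set W := Wm; set U := Umx Psi => hW.
have E0 : W - mu^-1 *: U - lam^-1 *: (U *m W) = 1%:M.
  rewrite {1}hW; apply/matrixP => i j; rewrite !mxE; ring.
rewrite -[Psi in LHS]mulmx1 -E0 !mulmxBr -!scalemxAr !mulmxA !mulNmx.
apply/matrixP => i j; rewrite !mxE; ring.
Qed.

Definition F1b Xb Xd := 2^-1 *: (mu^-1 *: B + (1%:M + mu^-1 *: A) *m Xb
  + lam^-1 *: (B *m Xd) + (1%:M + lam^-1 *: A) *m (Xb *m Xd)).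
Definition F1d Xb Xd := 2^-1 *: ((1%:M + mu^-1 *: D) + mu^-1 *: (C *m Xb)
  + (1%:M + lam^-1 *: D) *m Xd + lam^-1 *: (C *m (Xb *m Xd))).
Definition F2b Xb Xd := Jm *m (mu^-1 *: B + lam^-1 *: (B *m Xd)
  + (1%:M + lam^-1 *: A) *m (Xb *m Xd)).

Lemma F1_sol : F1b Psi Wm = Psi /\ F1d Psi Wm = Wm.
Proof.
have hP := Psi_eq; have hW := W_eq; move: hP hW; rewrite /Umx.
set W := Wm => hP hW; split.
  apply/eqP; rewrite -subr_eq0.
  have -> : F1b Psi W - Psi = 2^-1 *: ((mu^-1 *: (B + A *m Psi)
      + lam^-1 *: ((B + A *m Psi) *m W) + Psi *m W) - Psi).
    rewrite /F1b; mxnorm; mxlin.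
  by rewrite -hP subrr scaler0.
apply/eqP; rewrite -subr_eq0.
have -> : F1d Psi W - W = 2^-1 *: ((1%:M + mu^-1 *: (D + C *m Psi)
    + lam^-1 *: ((D + C *m Psi) *m W)) - W).
  rewrite /F1d; mxnorm; mxlin.
by rewrite -hW subrr scaler0.
Qed.

Lemma F1_low Xb Xd : mxnn Xb -> mxnn Xd -> mxle Xb Psi ->
  F1b Xb Xd = Xb -> F1d Xb Xd = Xd -> Xb = Psi /\ Xd = Wm.
Proof.
move=> hb hd hbP e1 e2.
have hXe : mxle (Xb *m ones R m) (ones R p).
  apply: mxle_trans Psi_sub; apply: mxleMr => //; exact: ones_nn.
have [hu _] := Amx_ok hb hXe.
have eA : Amx Xb *m Xd = 1%:M + mu^-1 *: Umx Xb.
  apply/eqP; rewrite -subr_eq0.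
  have -> : Amx Xb *m Xd - (1%:M + mu^-1 *: Umx Xb) = 2%:R *: (Xd - F1d Xb Xd).
    rewrite /Amx /Umx /F1d; mxnorm; mxlin.
  by rewrite e2 subrr scaler0.
have eA' : Xd *m Amx Xb = 1%:M + mu^-1 *: Umx Xb.
  have hXd : Xd = invmx (Amx Xb) *m (1%:M + mu^-1 *: Umx Xb) by rewrite -eA mulKmx.
  by rewrite hXd -mulmxA /Amx -comm_AU mulmxA mulVmx // mul1mx.
have eK : Xb *m (1%:M - Xd) = (B + A *m Xb) *m (mu^-1 *: 1%:M + lam^-1 *: Xd).
  apply/eqP; rewrite -subr_eq0.
  have -> : Xb *m (1%:M - Xd) - (B + A *m Xb) *m (mu^-1 *: 1%:M + lam^-1 *: Xd)
      = 2%:R *: (Xb - F1b Xb Xd).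
    rewrite /F1b; mxnorm; mxlin.
  by rewrite e1 subrr scaler0.
have hRic : Ric Xb = 0 by rewrite Ric_U; exact: key_alg eK eA'.
have hXb : Xb = Psi by apply: mxle_anti => //; exact: hPmin.
split => //.
rewrite hXb in eA.
have hu' := (Amx_ok hPnn Psi_sub).1.
by rewrite -[Xd](mulKmx hu') eA -W_left mulKmx.
Qed.

Lemma F2_sol : F2b Psi Wm = Psi.
Proof.
have [hJu _] := J_ok.
have hP := Psi_eq; move: hP; set W := Wm => hP.
rewrite /F2b /Jm.
have -> : mu^-1 *: B + lam^-1 *: (B *m W) + (1%:M + lam^-1 *: A) *m (Psi *m W)
   = (1%:M - mu^-1 *: A) *m Psi.
  apply/eqP; rewrite -subr_eq0.
  have -> : mu^-1 *: B + lam^-1 *: (B *m W) + (1%:M + lam^-1 *: A) *m (Psi *m W)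
     - (1%:M - mu^-1 *: A) *m Psi
     = (mu^-1 *: (B + A *m Psi) + lam^-1 *: ((B + A *m Psi) *m W) + Psi *m W) - Psi.
    mxnorm; mxlin.
  by rewrite -hP subrr.
by rewrite mulKmx.
Qed.

Lemma F2_low Xb : mxnn Xb -> mxle Xb Psi -> F2b Xb Wm = Xb -> mxle Psi Xb.
Proof.
move=> hb hbP e1.
have [hJu _] := J_ok.
have hWr := W_right.
move: e1 hWr; rewrite /F2b /Jm; set W := Wm => e1 hWr.
have e : (1%:M - mu^-1 *: A) *m Xb
    = mu^-1 *: B + lam^-1 *: (B *m W) + (1%:M + lam^-1 *: A) *m (Xb *m W).
  by rewrite -[X in _ *m X = _]e1 mulKVmx.
have eK : Xb *m (1%:M - W) = (B + A *m Xb) *m (mu^-1 *: 1%:M + lam^-1 *: W).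
  apply/eqP; rewrite -subr_eq0.
  have -> : Xb *m (1%:M - W) - (B + A *m Xb) *m (mu^-1 *: 1%:M + lam^-1 *: W)
     = (1%:M - mu^-1 *: A) *m Xb
       - (mu^-1 *: B + lam^-1 *: (B *m W) + (1%:M + lam^-1 *: A) *m (Xb *m W)).
    mxnorm; mxlin.
  by rewrite e subrr.
have hR := key_alg eK hWr.
have hRic : Ric Xb = Xb *m C *m (Xb - Psi).
  apply/eqP; rewrite -subr_eq0.
  have -> : Ric Xb - Xb *m C *m (Xb - Psi) = (B + A *m Xb) + Xb *m Umx Psi.
    rewrite /Ric /Umx; mxnorm; mxlin.
  by rewrite hR.
apply: Gamma_lemma => //; rewrite hRic.
apply: (@mxle_trans _ _ _ _ (Xb *m C *m 0)); last by rewrite mulmx0; exact: mxle_refl.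
apply: mxleMl; first exact: mxnnM.
by move=> i j; rewrite !mxE subr_le0.
Qed.

End Fluid.


Section Blocks.
Variable R : realType.

Lemma mxnn_block m1 m2 n1 n2 (a : 'M[R]_(m1, n1)) (b : 'M[R]_(m1, n2))
  (c : 'M[R]_(m2, n1)) (d : 'M[R]_(m2, n2)) :
  mxnn a -> mxnn b -> mxnn c -> mxnn d -> mxnn (block_mx a b c d).
Proof.
move=> ha hb hc hd i j.
case: (split_ordP i) => i' ->; case: (split_ordP j) => j' ->;
  by rewrite ?block_mxEul ?block_mxEur ?block_mxEdl ?block_mxEdr.
Qed.

Lemma mxle_block_inv m1 m2 n1 n2 (a a' : 'M[R]_(m1, n1)) (b b' : 'M[R]_(m1, n2))
  (c c' : 'M[R]_(m2, n1)) (d d' : 'M[R]_(m2, n2)) :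
  mxle (block_mx a b c d) (block_mx a' b' c' d') ->
  [/\ mxle a a', mxle b b', mxle c c' & mxle d d'].
Proof.
move=> h; split => i j.
- by have := h (lshift _ i) (lshift _ j); rewrite !block_mxEul.
- by have := h (lshift _ i) (rshift _ j); rewrite !block_mxEur.
- by have := h (rshift _ i) (lshift _ j); rewrite !block_mxEdl.
- by have := h (rshift _ i) (rshift _ j); rewrite !block_mxEdr.
Qed.

Lemma mxnn_block_inv m1 m2 n1 n2 (a : 'M[R]_(m1, n1)) (b : 'M[R]_(m1, n2))
  (c : 'M[R]_(m2, n1)) (d : 'M[R]_(m2, n2)) :
  mxnn (block_mx a b c d) -> [/\ mxnn a, mxnn b, mxnn c & mxnn d].
Proof.
move=> h; split => i j.
- by have := h (lshift _ i) (lshift _ j); rewrite !block_mxEul.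
- by have := h (lshift _ i) (rshift _ j); rewrite !block_mxEur.
- by have := h (rshift _ i) (lshift _ j); rewrite !block_mxEdl.
- by have := h (rshift _ i) (rshift _ j); rewrite !block_mxEdr.
Qed.

Lemma Pmat_blocks p m (T : 'M[R]_(p + m)) a :
  Pmat T a = block_mx (1%:M + a^-1 *: ulsubmx T) (a^-1 *: ursubmx T)
                      (a^-1 *: dlsubmx T) (1%:M + a^-1 *: drsubmx T).
Proof.
rewrite /Pmat -{1}[T]submxK (scalar_mx_block p m 1) scale_block_mx add_block_mx.
by rewrite ?addr0 ?add0r.
Qed.

Lemma onesE k (i : 'I_k) j : ones R k i j = 1.
Proof. by rewrite mxE. Qed.

End Blocks.

Section QBlocks.
Variables (R : realType) (p m : nat).
Variables (A : 'M[R]_p) (B : 'M[R]_(p, m)) (C : 'M[R]_(m, p)) (D : 'M[R]_m) (lam mu : R).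
Hypotheses (hlam : 0 < lam) (hmu : 0 < mu).

Lemma Q1_block Xb Xd :
  Qmap (2^-1 *: block_mx 0 (mu^-1 *: B) 0 (1%:M + mu^-1 *: D))
       (2^-1 *: block_mx (1%:M + mu^-1 *: A) (lam^-1 *: B) (mu^-1 *: C) (1%:M + lam^-1 *: D))
       (2^-1 *: block_mx (1%:M + lam^-1 *: A) 0 (lam^-1 *: C) 0)
       (block_mx 0 Xb 0 Xd)
  = block_mx 0 (F1b A B lam mu Xb Xd) 0 (F1d C D lam mu Xb Xd).
Proof.
rewrite /Qmap -!scalemxAl !mulmx_block !scale_block_mx !add_block_mx /F1b /F1d.
congr block_mx; mxnorm; mxlin.
Qed.

Lemma Q2_block (J : 'M[R]_p) (W : 'M[R]_m) Xb Xd :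
  Qmap (block_mx 0 (J *m (mu^-1 *: B)) 0 W)
       (block_mx 0 (J *m (lam^-1 *: B)) 0 0)
       (block_mx (J *m (1%:M + lam^-1 *: A)) 0 0 0)
       (block_mx 0 Xb 0 Xd)
  = block_mx 0 (J *m (mu^-1 *: B + lam^-1 *: (B *m Xd)
                 + (1%:M + lam^-1 *: A) *m (Xb *m Xd))) 0 W.
Proof.
rewrite /Qmap !mulmx_block !add_block_mx.
congr block_mx; mxnorm; mxlin.
Qed.

End QBlocks.

Local Close Scope classical_set_scope.
Unset Implicit Arguments.

Theorem theorem5 (R : realType) (p m : nat) (hp : (0 < p)%N) (hm : (0 < m)%N)
  (T : 'M[R]_(p + m)) (Psi : 'M[R]_(p, m)) (lam mu : R) :
  is_generator T ->
  is_min_nonneg_sol T Psi ->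
  0 < lam -> 0 < mu ->
  (forall i, `|T i i| <= lam) -> (forall i, `|T i i| <= mu) ->
  let Pl := Pmat T lam in
  let Pm := Pmat T mu in
  let W := Wmat T Psi lam mu in
  let J := invmx (1%:M - mu^-1 *: ulsubmx T) in
  let C'm := (1 / 2 : R) *: block_mx 0 (ursubmx Pm) 0 (drsubmx Pm) in
  let C'0 := (1 / 2 : R) *: block_mx (ulsubmx Pm) (ursubmx Pl) (dlsubmx Pm) (drsubmx Pl) in
  let C'p := (1 / 2 : R) *: block_mx (ulsubmx Pl) 0 (dlsubmx Pl) 0 in
  let Cm := block_mx 0 (J *m ursubmx Pm) 0 W in
  let C0 := block_mx 0 (J *m ursubmx Pl) 0 0 in
  let Cp := block_mx (J *m ulsubmx Pl) 0 0 0 in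
  let G := block_mx 0 Psi 0 W in
  is_Gmatrix C'm C'0 C'p G /\ is_Gmatrix Cm C0 Cp G.
Proof.
move=> [hoff hrow] [hPnn hPric hPmin] hlam hmu hdl hdm.
move=> Pl Pm W J C'm C'0 C'p Cm C0 Cp G.
rewrite /C'm /C'0 /C'p /Cm /C0 /Cp /G /Pl /Pm /J /W.
rewrite !Pmat_blocks !block_mxKul !block_mxKur !block_mxKdl !block_mxKdr div1r.
have hT : T = block_mx (ulsubmx T) (ursubmx T) (dlsubmx T) (drsubmx T) by rewrite submxK.
move: hoff hrow hdl hdm hPric hPmin; rewrite /psi_riccati /Wmat /Umat.
set A := ulsubmx T; set B := ursubmx T; set C := dlsubmx T; set D := drsubmx T.
move=> hoff hrow hdl hdm hPric hPmin.
have eW : (1%:M + mu^-1 *: (D + C *m Psi)) *m invmx (1%:M - lam^-1 *: (D + C *m Psi))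
  = Wm C D Psi lam mu by [].
have eJ : invmx (1%:M - mu^-1 *: A) = Jm A mu by [].
rewrite eW eJ.
have hA : forall i j, i != j -> 0 <= A i j.
  move=> i j hij; have := hoff (lshift m i) (lshift m j); rewrite eq_lshift hT block_mxEul.
  exact.
have hD : forall i j, i != j -> 0 <= D i j.
  move=> i j hij; have := hoff (rshift p i) (rshift p j); rewrite eq_rshift hT block_mxEdr.
  exact.
have hB : mxnn B.
  move=> i j; have := hoff (lshift m i) (rshift p j); rewrite eq_lrshift hT block_mxEur.
  exact.
have hC : mxnn C.
  move=> i j; have := hoff (rshift p i) (lshift m j); rewrite eq_rlshift hT block_mxEdl.
  exact.
have rowP : A *m ones R p + B *m ones R m = 0.
  apply/matrixP => i k; rewrite !mxE.
  under eq_bigr do rewrite onesE mulr1.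
  under [X in _ + X]eq_bigr do rewrite onesE mulr1.
  have := hrow (lshift m i); rewrite big_split_ord hT /=.
  under eq_bigr do rewrite block_mxEul.
  by under [X in _ + X = _ -> _]eq_bigr do rewrite block_mxEur.
have rowM : C *m ones R p + D *m ones R m = 0.
  apply/matrixP => i k; rewrite !mxE.
  under eq_bigr do rewrite onesE mulr1.
  under [X in _ + X]eq_bigr do rewrite onesE mulr1.
  have := hrow (rshift p i); rewrite big_split_ord hT /=.
  under eq_bigr do rewrite block_mxEdl.
  by under [X in _ + X = _ -> _]eq_bigr do rewrite block_mxEdr.
have diag : forall a i, `|T i i| <= a -> - a <= T i i.
  by move=> a i; rewrite ler_norml => /andP[].
have hAl : forall i, - lam <= A i i.
  by move=> i; have := diag _ _ (hdl (lshift m i)); rewrite hT block_mxEul.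
have hAm : forall i, - mu <= A i i.
  by move=> i; have := diag _ _ (hdm (lshift m i)); rewrite hT block_mxEul.
have hDl : forall i, - lam <= D i i.
  by move=> i; have := diag _ _ (hdl (rshift p i)); rewrite hT block_mxEdr.
have hDm : forall i, - mu <= D i i.
  by move=> i; have := diag _ _ (hdm (rshift p i)); rewrite hT block_mxEdr.
have hi2 : (0 : R) <= 2^-1 by rewrite invr_ge0 ler0n.
have hil : (0 : R) <= lam^-1 by rewrite invr_ge0 ltW.
have him : (0 : R) <= mu^-1 by rewrite invr_ge0 ltW.
have hWnn := W_nn hA hD hB hC rowP rowM hlam hmu hAm hDm hPnn hPric hPmin.
have hJnn := (J_ok hA hB rowP hmu).2.
split.
- apply: G_lemma.
  + apply: mxnnZ => //; apply: mxnn_block; [exact: mxnn0 | exact: mxnnZ | exact: mxnn0 |].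
    exact: nn_one_plus.
  + apply: mxnnZ => //; apply: mxnn_block; [exact: nn_one_plus | exact: mxnnZ | exact: mxnnZ |].
    exact: nn_one_plus.
  + apply: mxnnZ => //; apply: mxnn_block; [exact: nn_one_plus | exact: mxnn0 | exact: mxnnZ |].
    exact: mxnn0.
  + by apply: mxnn_block => //; exact: mxnn0.
  + have [e1 e2] := F1_sol hA hD hB hC rowP rowM hlam hmu hAm hDm hPnn hPric hPmin.
    by rewrite Q1_block //; congr block_mx; [exact: e1 | exact: e2].
  + move=> X hX hXG hQ.
    rewrite -[X]submxK in hX hXG hQ *.
    have [n1 n2 n3 n4] := mxnn_block_inv hX.
    have [l1 l2 l3 l4] := mxle_block_inv hXG.
    have z1 : ulsubmx X = 0 by apply: mxle_anti => //; exact: mxle_nn.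
    have z3 : dlsubmx X = 0 by apply: mxle_anti => //; exact: mxle_nn.
    rewrite z1 z3 Q1_block // in hQ *.
    have [_ e1 _ e2] := eq_block_mx hQ.
    have [eb ed] := F1_low hA hD hB hC rowP rowM hlam hmu hAm hDm hPnn hPric hPmin n2 n4 l2 e1 e2.
    rewrite eb ed; exact: mxle_refl.
- apply: G_lemma.
  + apply: mxnn_block => //; [exact: mxnn0 | | exact: mxnn0].
    by apply: mxnnM => //; exact: mxnnZ.
  + apply: mxnn_block; [exact: mxnn0 | | exact: mxnn0 | exact: mxnn0].
    by apply: mxnnM => //; exact: mxnnZ.
  + apply: mxnn_block; [| exact: mxnn0 | exact: mxnn0 | exact: mxnn0].
    by apply: mxnnM => //; exact: nn_one_plus.
  + by apply: mxnn_block => //; exact: mxnn0.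
  + have e := F2_sol hA hD hB hC rowP rowM hlam hmu hAm hDm hPnn hPric hPmin.
    rewrite /F2b in e.
    by rewrite Q2_block // e.
  + move=> X hX hXG hQ.
    rewrite -[X]submxK in hX hXG hQ *.
    have [n1 n2 n3 n4] := mxnn_block_inv hX.
    have [l1 l2 l3 l4] := mxle_block_inv hXG.
    have z1 : ulsubmx X = 0 by apply: mxle_anti => //; exact: mxle_nn.
    have z3 : dlsubmx X = 0 by apply: mxle_anti => //; exact: mxle_nn.
    rewrite z1 z3 Q2_block // in hQ *.
    have [_ e1 _ e2] := eq_block_mx hQ.
    rewrite -e2 in e1.
    have hb := F2_low hA hD hB hC rowP rowM hlam hmu hAm hDm hPnn hPric hPmin n2 l2 e1.
    have eb : ursubmx X = Psi by apply: mxle_anti.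
    rewrite eb -e2; exact: mxle_refl.
Qed.
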